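(* Let $\boldsymbol{G}\in\{0,1\}^{r\times m}$ with $r\le m$, let $p=\min\{\lfloor m/2\rfloor,r\}$, and let $q$ be a prime power with $q\ge q_{\min}=\binom{m}{p}$. Then in every execution of the MCD algorithm on $(\boldsymbol{G},q)$, at every step where an entry $h_{k,i}$ ($k\in[r]$, $i\in G_k$) is assigned, the set $\mathbb{F}_q\setminus Z_{k,i}^{L}$ is nonempty, i.e. there is always a value outside the veto set.
   Context: $G_k=\{i: g_{k,i}=1\}$. $\boldsymbol{H}_{[k]}$ is the first $k$ rows of $\boldsymbol{H}\in\mathbb{F}_q^{r\times m}$, $\boldsymbol{H}^{L}_{[k]}$ its columns in $L$. A set $S$ of column indices is a circuit of a matrix if its columns are linearly dependent but those of every proper subset are independent. Veto set: for $2\le k\le r$, $i\in L\subseteq[m]$, with all entries of $\boldsymbol{H}_{[k]}^{L}$ except $h_{k,i}$ fixed, and a circuit $C$ of $\boldsymbol{H}_{[k-1]}$ with $i\in C\subseteq L$, write column $i$ of $\boldsymbol{H}_{[k-1]}$ uniquely as $\sum_{j\in C\setminus\{i\}}f_j\cdot(\text{column }j)$ and set $c(C)=\sum_{j\in C\setminus\{i\}}f_jh_{k,j}$; $Z_{k,i}^{L}=\{c(L'\cup\{i\}):L'\subseteq L\setminus\{i\},\ L'\cup\{i\}\text{ a circuit of }\boldsymbol{H}_{[k-1]}\}$. MCD algorithm: set $h_{k,i}=0$ whenever $g_{k,i}=0$; set $h_{1,i}=1$ for $i\in G_1$; for $k=2,\dots,r$: let $R=G_k$; while $R\ne\emptyset$: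 pick any $i\in R$, set $R\leftarrow R\setminus\{i\}$, $L=[m]\setminus R$, compute $Z_{k,i}^{L}$ from the current entries, and assign to $h_{k,i}$ an arbitrary element of $\mathbb{F}_q\setminus Z_{k,i}^{L}$. *)

(* Defs.v *)
From HB Require Import structures.
From mathcomp Require Import all_boot all_order all_algebra.
Set Implicit Arguments. Unset Strict Implicit. Unset Printing Implicit Defensive.
Import GRing.Theory.
Local Open Scope ring_scope.

Section MCD.
Variables (F : fieldType) (r m : nat).

(* H_[k]: the first k rows of H (0-based rows 0..k-1), represented by the
   r x m matrix whose rows >= k are zeroed out (zero rows do not affect
   linear (in)dependence of columns). *)
Definition topk (k : nat) (H : 'M[F]_(r, m)) : 'M[F]_(r, m) :=
  \matrix_(a, j) if (a < k)%N then H a j else 0.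

Definition cols_of (k : nat) (H : 'M[F]_(r, m)) (S : {set 'I_m}) : seq 'cV[F]_r :=
  [seq col j (topk k H) | j <- enum S].

Definition is_circuit (k : nat) (H : 'M[F]_(r, m)) (S : {set 'I_m}) : bool :=
  ~~ free (cols_of k H S) &&
  [forall T : {set 'I_m}, (T \proper S) ==> free (cols_of k H T)].

(* z \in Z_{k,i}^L, where k0 : 'I_r is the 0-based index of row k
   (so H_[k-1] = topk k0 H and h_{k,j} = H k0 j). *)
Definition veto (k0 : 'I_r) (H : 'M[F]_(r, m)) (L : {set 'I_m}) (i : 'I_m)
    (z : F) : Prop :=
  exists L' : {set 'I_m},
    [/\ L' \subset L :\ i,
        is_circuit k0 H (i |: L') &
        exists f : 'I_m -> F,
          col i (topk k0 H) = \sum_(j in L') f j *: col j (topk k0 H) /\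
          z = \sum_(j in L') f j * H k0 j].

(* H is consistent with an execution of the MCD algorithm on G using, for
   each row k >= 1 (0-based), the processing order s k of G_k, up to (but not
   including) the step of row k0 whose already-processed prefix is pre.
   At the step processing i with s k = pre ++ i :: post, the remaining set is
   R = post and L = [m] \ R. *)
Definition mcd_prefix (G : 'M[bool]_(r, m)) (s : 'I_r -> seq 'I_m)
    (H : 'M[F]_(r, m)) (k0 : 'I_r) (pre0 : seq 'I_m) : Prop :=
  [/\ (forall k j, ~~ G k j -> H k j = 0),
      (forall (k : 'I_r) j, val k = 0%N -> G k j -> H k j = 1),
      (forall k : 'I_r, (0 < k)%N -> perm_eq (s k) (enum [set j | G k j])) &
      (forall (k : 'I_r) pre i post, (0 < k)%N -> s k = pre ++ i :: post ->
         ((k < k0)%N \/ (k = k0 /\ (size pre < size pre0)%N)) ->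
         ~ veto k H (~: [set x in post]) i (H k i))].

End MCD.

(* Main.v *)
Require Import Defs.
From HB Require Import structures.
From mathcomp Require Import all_boot all_order all_algebra zify.
From Stdlib Require Import Classical ClassicalEpsilon.
Set Implicit Arguments. Unset Strict Implicit. Unset Printing Implicit Defensive.
Import GRing.Theory.
Local Open Scope ring_scope.

Section Aux.
Variables (F : fieldType) (r m : nat) (k : nat) (H : 'M[F]_(r, m)).
Local Notation v j := (col j (topk k H)).

Lemma sum_cols (S : {set 'I_m}) (i0 : 'I_m) (a : 'I_m -> F) :
  \sum_(t < size (cols_of k H S)) a (nth i0 (enum S) t) *: (cols_of k H S)`_t
  = \sum_(j in S) a j *: v j.
Proof.
rewrite -[RHS]big_enum /= [RHS](big_nth i0) big_mkord /cols_of size_map.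
by apply: eq_bigr => t _; rewrite (nth_map i0).
Qed.

Lemma indepP (S : {set 'I_m}) : free (cols_of k H S) ->
  forall a : 'I_m -> F, \sum_(j in S) a j *: v j = 0 ->
  forall j, j \in S -> a j = 0.
Proof.
move=> fS a sa j jS.
have /freeP fP : free (in_tuple (cols_of k H S)) by [].
have jlt : (index j (enum S) < size (cols_of k H S))%N.
  by rewrite size_map index_mem mem_enum.
have := fP (fun t => a (nth j (enum S) t)).
rewrite sum_cols => /(_ sa (Ordinal jlt)) /=.
by rewrite nth_index // mem_enum.
Qed.

Lemma cols_perm (T : {set 'I_m}) j : j \notin T ->
  perm_eq (cols_of k H (j |: T)) (v j :: cols_of k H T).
Proof.
move=> jT; rewrite /cols_of (_ : v j :: _ = [seq v x | x <- j :: enum T]) //; apply: perm_map.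
apply: uniq_perm; first exact: enum_uniq.
  by rewrite /= mem_enum jT enum_uniq.
by move=> x; rewrite mem_enum in_cons mem_enum in_setU1.
Qed.

Lemma extend (A L : {set 'I_m}) : L \subset A -> free (cols_of k H L) ->
  exists T : {set 'I_m}, [/\ L \subset T, T \subset A, free (cols_of k H T) &
     #|T| = \dim <<cols_of k H A>>%VS].
Proof.
move=> LA fL.
have P0 : (L \subset L) && (L \subset A) && free (cols_of k H L) by rewrite subxx LA.
case: (@arg_maxnP _ L (fun T : {set 'I_m} => (L \subset T) && (T \subset A) && free (cols_of k H T)) (fun T : {set 'I_m} => #|T|) P0).
move=> T /andP[/andP[LT TA] fT] Tmax.
exists T; split => //.
have -> : #|T| = \dim <<cols_of k H T>>%VS.
  by rewrite (eqP fT) size_map cardE.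
congr (\dim _); apply/eqP; rewrite eqEsubv; apply/andP; split.
  apply: sub_span => x /mapP[j]; rewrite mem_enum => jT ->.
  by apply: map_f; rewrite mem_enum (subsetP TA).
apply/span_subvP => x /mapP[j]; rewrite mem_enum => jA ->.
case: (boolP (j \in T)) => jT.
  by apply: memv_span; apply: map_f; rewrite mem_enum.
have : ~~ free (cols_of k H (j |: T)).
  apply/negP => fjT.
  have := Tmax (j |: T); rewrite (subset_trans LT (subsetUr _ _)).
  rewrite subUset sub1set jA TA fjT cardsU1 jT /= => /(_ isT).
  by rewrite ltnn.
rewrite (perm_free (cols_perm jT)) free_cons fT andbT.
by rewrite negbK.
Qed.

Lemma dim_cols_le (A : {set 'I_m}) : (\dim <<cols_of k H A>>%VS <= k)%N.
Proof.
pose E := [set a : 'I_r | (a < k)%N].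
pose U := <<[seq (delta_mx a ord0 : 'cV[F]_r) | a <- enum E]>>%VS.
have EU : (#|E| <= k)%N.
  rewrite cardE -(size_map val) -(size_iota 0 k); apply: uniq_leq_size.
    by rewrite map_inj_uniq ?enum_uniq //; apply: val_inj.
  by move=> x /mapP[a]; rewrite mem_enum inE => ak ->; rewrite mem_iota.
apply: (leq_trans _ EU); rewrite cardE.
rewrite -[size (enum E)](size_map (fun a => (delta_mx a ord0 : 'cV[F]_r))).
apply: leq_trans (dim_span _).
apply: dimvS; apply/span_subvP => x /mapP[j _ ->].
rewrite [col j _]matrix_sum_delta; apply: memv_suml => a _.
rewrite big_ord1; case: (ltnP a k) => ak.
  by apply: memvZ; apply: memv_span; rewrite ?ord1; apply: map_f; rewrite mem_enum inE.
by rewrite !mxE (negbTE (_ : ~~ (a < k)%N)) ?scale0r ?mem0v // -leqNgt.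
Qed.

Lemma sum_sub (V : nmodType) (T L : {set 'I_m}) (G : 'I_m -> V) : L \subset T ->
  \sum_(j in L) G j = \sum_(j in T) (if j \in L then G j else 0).
Proof.
move=> LT; rewrite big_mkcond [RHS]big_mkcond; apply: eq_bigr => j _.
case: (boolP (j \in L)) => jL //; first by rewrite (subsetP LT j jL).
by case: (j \in T).
Qed.

Lemma uniq_val (T L1 L2 : {set 'I_m}) (f1 f2 h : 'I_m -> F) (w : 'cV[F]_r) :
  free (cols_of k H T) -> L1 \subset T -> L2 \subset T ->
  w = \sum_(j in L1) f1 j *: v j -> w = \sum_(j in L2) f2 j *: v j ->
  \sum_(j in L1) f1 j * h j = \sum_(j in L2) f2 j * h j.
Proof.
move=> fT L1T L2T e1 e2.
pose c1 j := if j \in L1 then f1 j else 0.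
pose c2 j := if j \in L2 then f2 j else 0.
have E (L : {set 'I_m}) (f : 'I_m -> F) (G : 'I_m -> 'cV[F]_r) : L \subset T ->
    \sum_(j in L) f j *: G j = \sum_(j in T) (if j \in L then f j else 0) *: G j.
  move=> LT; rewrite (sum_sub _ LT); apply: eq_bigr => j _.
  by case: (j \in L); rewrite ?scale0r.
have E' (L : {set 'I_m}) (f : 'I_m -> F) : L \subset T ->
    \sum_(j in L) f j * h j = \sum_(j in T) (if j \in L then f j else 0) * h j.
  move=> LT; rewrite (sum_sub _ LT); apply: eq_bigr => j _.
  by case: (j \in L); rewrite ?mul0r.
have z0 : \sum_(j in T) (c1 j - c2 j) *: v j = 0.
  under eq_bigr do rewrite scalerBl.
  by rewrite sumrB -!E // -e1 -e2 subrr.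
have ceq := indepP fT z0.
rewrite (E' _ _ L1T) (E' _ _ L2T); apply: eq_bigr => j jT.
by have /eqP := ceq j jT; rewrite subr_eq0 /c1 /c2 => /eqP ->.
Qed.
End Aux.
Local Close Scope ring_scope.
Lemma bin_step n b : (2 * b.+1 <= n.+1)%N -> ('C(n, b) <= 'C(n, b.+1))%N.
Proof.
move=> h; have e := mul_bin_left n b.
have h2 : (b.+1 <= n - b)%N by lia.
have : (b.+1 * 'C(n, b) <= b.+1 * 'C(n, b.+1))%N.
  rewrite e; apply: leq_mul => //.
by rewrite leq_pmul2l.
Qed.

Lemma bin_mono n a b : (a <= b)%N -> (2 * b <= n.+1)%N -> ('C(n, a) <= 'C(n, b))%N.
Proof.
elim: b => [|b IH] ab hb; first by move: ab; rewrite leqn0 => /eqP ->.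
case: (ltngtP a b.+1) ab => // [ab _|-> _]; last by [].
have hb' : (2 * b <= n.+1)%N by lia.
rewrite ltnS in ab.
exact: leq_trans (IH ab hb') (@bin_step n b hb).
Qed.

Lemma bin_final m r d : (2 <= r)%N -> (r <= m)%N -> (d < r)%N -> (d < m)%N ->
  ('C(m.-1, d) < 'C(m, minn m./2 r))%N.
Proof.
move=> r2 rm dm dr.
have hm := odd_double_half m.
have hh : (2 * m./2 <= m <= 2 * m./2 + 1)%N.
  by rewrite mul2n -{2 4}hm; case: (odd m) => /=; lia.
move: (m./2) hh {hm} => X /andP[hh1 hh2].
have [p [Ep [p1 p2]]] : exists p, [/\ minn X r = p.+1, (2 * p.+1 <= m)%N & (p < r)%N].
  case: (leqP X r) => hXr.
    exists X.-1; split; lia.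
  exists r.-1; split; lia.
rewrite Ep.
case: m rm dm dr hh1 hh2 p1 => [|n] rm dm dr hh1 hh2 p1; first lia.
rewrite binS /=.
have Cp : (0 < 'C(n, p.+1))%N by rewrite bin_gt0; lia.
case: (leqP d p) => dp.
  have : ('C(n, d) <= 'C(n, p))%N by apply: bin_mono => //; lia.
  lia.
have EX : X = p.+1.
  case: (leqP X r) Ep => hXr; lia.
have : ('C(n, d) <= 'C(n, p.+1))%N.
  case: (leqP d p.+1) => dp1.
    apply: bin_mono => //; lia.
  rewrite -bin_sub; last lia.
  apply: bin_mono; lia.
have : (0 < 'C(n, p))%N by rewrite bin_gt0; lia.
lia.
Qed.
Local Open Scope ring_scope.

Theorem proposition6 (F : finFieldType) (r m : nat) (G : 'M[bool]_(r, m))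
  (s : 'I_r -> seq 'I_m) (H : 'M[F]_(r, m)) (k0 : 'I_r)
  (pre : seq 'I_m) (i : 'I_m) (post : seq 'I_m) :
  (r <= m)%N ->
  ('C(m, minn m./2 r) <= #|F|)%N ->
  (0 < k0)%N ->
  s k0 = pre ++ i :: post ->
  mcd_prefix G s H k0 pre ->
  exists z : F, ~ veto k0 H (~: [set x in post]) i z.
Proof.
move=> rm CF k0pos _ _.
apply: NNPP => Hall.
have Hv : forall z, veto k0 H (~: [set x in post]) i z.
  by move=> z; apply: NNPP => nz; apply: Hall; exists z.
pose A : {set 'I_m} := ~: [set i].
pose d := \dim <<cols_of k0 H A>>%VS.
have ex : forall z : F, exists T : {set 'I_m},
    [/\ T \in [set T : {set 'I_m} | T \subset A & #|T| == d],
        free (cols_of k0 H T) &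
        exists (L' : {set 'I_m}) (f : 'I_m -> F), [/\ L' \subset T,
          col i (topk k0 H) = \sum_(j in L') f j *: col j (topk k0 H) &
          z = \sum_(j in L') f j * H k0 j]].
  move=> z; have [L' [LL circ [f [e1 e2]]]] := Hv z.
  have LA : L' \subset A.
    apply/subsetP => x /(subsetP LL); rewrite !inE => /andP[].
    by [].
  have iL : i \notin L' by apply/negP => /(subsetP LA); rewrite !inE eqxx.
  have fL : free (cols_of k0 H L').
    case/andP: circ => _ /forallP /(_ L') /implyP; apply.
    by apply: properUr; rewrite sub1set.
  have [T [LT TA fT cT]] := extend LA fL.
  exists T; split => //; first by rewrite inE TA cT eqxx.
  by exists L', f.
pose g z := proj1_sig (constructive_indefinite_description _ (ex z)).
have gP z : [/\ g z \in [set T : {set 'I_m} | T \subset A & #|T| == d],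
        free (cols_of k0 H (g z)) &
        exists (L' : {set 'I_m}) (f : 'I_m -> F), [/\ L' \subset g z,
          col i (topk k0 H) = \sum_(j in L') f j *: col j (topk k0 H) &
          z = \sum_(j in L') f j * H k0 j]].
  exact: (proj2_sig (constructive_indefinite_description _ (ex z))).
have ginj : injective g.
  move=> z1 z2 eg.
  have [_ fT [L1 [f1 [L1T e1 ->]]]] := gP z1.
  have [_ _ [L2 [f2 [L2T e2 ->]]]] := gP z2.
  rewrite eg in L1T fT.
  exact: (uniq_val (fun j => H k0 j) fT L1T L2T e1 e2).
have card1 : (#|F| <= 'C(m.-1, d))%N.
  rewrite -cardsT -(card_imset [set: F] ginj).
  have -> : m.-1 = #|A| by rewrite cardsC1 card_ord.
  rewrite -cards_draws; apply: subset_leq_card.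
  by apply/subsetP => T /imsetP[z _ ->]; case: (gP z).
have dk : (d <= k0)%N by apply: dim_cols_le.
have k0r := ltn_ord k0.
have := bin_final (_ : (2 <= r)%N) rm (leq_ltn_trans dk k0r) (leq_trans (leq_ltn_trans dk k0r) rm).
move=> /(_ ltac:(lia)) => hb.
have := leq_trans hb (leq_trans CF card1).
by rewrite ltnn.
Qed.
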